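(* Let $m$ be a positive integer and let $r,\ell,h,p,q$ be nonnegative integers with $\ell\ge 2$ satisfying: (1) $h<2^{\ell-2}$; (2) $rm=p\cdot 2^{\ell+1}+2^{\ell-1}+h$; (3) $(r+1)m\leq p\cdot 2^{\ell+1}+5\cdot 2^{\ell-2}$; (4) $(r+2^{\ell-2})m=q\cdot 2^{\ell+1}+3\cdot 2^{\ell-2}+h$; (5) $\mathbf t_{p+1}\neq\mathbf t_{q+1}$. Then $\langle rm+1,(r+1)m\rangle=\langle (r+2^{\ell-2})m+1,(r+2^{\ell-2}+1)m\rangle$, and consequently $\mathfrak K(m)\leq r+2^{\ell-2}+1$.
   Context: The Thue–Morse word is $\mathbf t=\mathbf t_1\mathbf t_2\cdots$ where $\mathbf t_i\in\{0,1\}$ has the parity of the number of $1$'s in the binary expansion of $i-1$. For positive integers $\alpha\le\beta$, $\langle\alpha,\beta\rangle=\mathbf t_\alpha\mathbf t_{\alpha+1}\cdots\mathbf t_\beta$. A $k$-anti-power is a word $w_1\cdots w_k$ with $w_1,\dots,w_k$ pairwise distinct words of equal length. For a positive integer $m$, $\mathfrak K(m)$ is the smallest positive integer $k$ such that the prefix $\langle 1,km\rangle$ of $\mathbf t$ is not a $k$-anti-power (i.e. the smallest $k$ such that $\langle (k-1)m+1,km\rangle=\langle nm+1,(n+1)m\rangle$ for some $0\le n<k-1$). *)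

(* Defs.v *)
From mathcomp Require Import all_boot.
Set Implicit Arguments. Unset Strict Implicit. Unset Printing Implicit Defensive.

Fixpoint popcount_aux (fuel n : nat) : nat :=
  match fuel with
  | 0 => 0
  | f.+1 => if n is 0 then 0 else odd n + popcount_aux f n./2
  end.
Definition popcount (n : nat) : nat := popcount_aux n n.

(* Thue--Morse word, 1-indexed: t_i = parity of popcount (i-1) *)
Definition tm (i : nat) : bool := odd (popcount i.-1).

Definition factor (a b : nat) : seq bool := [seq tm i | i <- iota a (b.+1 - a)].

(* block n (0-based) of length m of the prefix: <n m + 1, (n+1) m> *)
Definition block (m n : nat) : seq bool := factor (n * m).+1 (n.+1 * m).

Definition is_antipower_prefix (m k : nat) : Prop :=
  forall i j, i < k -> j < k -> block m i = block m j -> i = j.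

(* K(m) <= N  :<=>  the smallest positive k with <1,km> not a k-anti-power
   exists and is at most N *)
Definition Kfrak_le (m N : nat) : Prop :=
  exists k, 0 < k <= N /\ ~ is_antipower_prefix m k.

(* Main.v *)
Require Import Defs.
From mathcomp Require Import all_boot.
From mathcomp Require Import zify.

Lemma halfS_le n : n.+1./2 <= n.
Proof. rewrite leq_half_double -addnn; lia. Qed.

Lemma aux_stable f g n : n <= f -> n <= g -> popcount_aux f n = popcount_aux g n.
Proof.
elim: f g n => [|f IH] [|g] [|n] //= Hf Hg.
congr (_ + _); apply: IH; have := halfS_le n; lia.
Qed.

Lemma popS n : 0 < n -> popcount n = odd n + popcount n./2.
Proof.
case: n => [|n] // _.
rewrite /popcount /=; congr (_ + _).
apply: aux_stable => //; have := halfS_le n; lia.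
Qed.

Lemma pop0 : popcount 0 = 0. Proof. by []. Qed.

Lemma pop_double n (b : bool) : popcount (b + n.*2) = b + popcount n.
Proof.
case: (posnP (b + n.*2)) => H.
  have -> : n = 0 by move: H; case: b; case: n.
  by move: H; case: b.
by rewrite popS // half_bit_double oddD odd_double addbF oddb.
Qed.

Lemma pop_split k n j : j < 2 ^ k -> popcount (n * 2 ^ k + j) = popcount n + popcount j.
Proof.
elim: k n j => [|k IH] n j.
  rewrite expn0 => H; have -> : j = 0 by lia. by rewrite muln1 addn0 pop0 addn0.
move=> Hj.
have Hj2 : j./2 < 2 ^ k.
  move: Hj; rewrite expnS -{1}(odd_double_half j).
  have := odd j; case: (odd j) => _; lia.
have E : n * 2 ^ k.+1 + j = odd j + (n * 2 ^ k + j./2).*2.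
  rewrite expnS -{1}(odd_double_half j) -!muln2 mulnDl; lia.
rewrite E pop_double IH // -{3}(odd_double_half j) pop_double; lia.
Qed.

Lemma map_iota_eq (f : nat -> bool) s1 s2 m :
  (forall k, k < m -> f (s1 + k) = f (s2 + k)) ->
  map f (iota s1 m) = map f (iota s2 m).
Proof.
elim: m s1 s2 => [|m IH] s1 s2 H //=.
congr (_ :: _).
  by have := H 0 isT; rewrite !addn0.
apply: IH => k Hk; rewrite !addSnnS; exact: H.
Qed.

Lemma key k x : x < 3 * 2 ^ k ->
  odd (popcount (2 * 2 ^ k + x)) != odd (popcount (3 * 2 ^ k + x)).
Proof.
move=> Hx.
have P2 : popcount 2 = 1 := erefl. have P3 : popcount 3 = 2 := erefl.
have P4 : popcount 4 = 1 := erefl. have P5 : popcount 5 = 2 := erefl.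
case: (ltnP x (2 ^ k)) => H1.
  by rewrite !pop_split // P2 P3 !oddD /=; case: (odd (popcount _)).
case: (ltnP x (2 * 2 ^ k)) => H2.
  have -> : 2 * 2 ^ k + x = 3 * 2 ^ k + (x - 2 ^ k) by lia.
  have -> : 3 * 2 ^ k + x = 4 * 2 ^ k + (x - 2 ^ k) by lia.
  rewrite !pop_split; [|lia|lia]. by rewrite ?P2 ?P3 ?P4 ?P5 !oddD /=; case: (odd (popcount _)).
have -> : 2 * 2 ^ k + x = 4 * 2 ^ k + (x - 2 * 2 ^ k) by lia.
have -> : 3 * 2 ^ k + x = 5 * 2 ^ k + (x - 2 * 2 ^ k) by lia.
rewrite !pop_split; [|lia|lia]. by rewrite ?P2 ?P3 ?P4 ?P5 !oddD /=; case: (odd (popcount _)).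
Qed.

Theorem lemma1 (m r l h p q : nat) :
  0 < m -> 2 <= l ->
  h < 2 ^ (l - 2) ->
  r * m = p * 2 ^ l.+1 + 2 ^ (l - 1) + h ->
  r.+1 * m <= p * 2 ^ l.+1 + 5 * 2 ^ (l - 2) ->
  (r + 2 ^ (l - 2)) * m = q * 2 ^ l.+1 + 3 * 2 ^ (l - 2) + h ->
  tm p.+1 != tm q.+1 ->
  factor (r * m).+1 (r.+1 * m) =
    factor ((r + 2 ^ (l - 2)) * m).+1 ((r + 2 ^ (l - 2)).+1 * m)
  /\ Kfrak_le m (r + 2 ^ (l - 2)).+1.
Proof.
move=> m0 l2 Hh E1 E2 E3 Htm.
case: l l2 Hh E1 E2 E3 => [|[|l']] // _.
have -> : l'.+2 - 2 = l' by lia.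
have -> : l'.+2 - 1 = l'.+1 by lia.
set a := 2 ^ l' => Hh E1 E2 E3.
have E8 : 2 ^ l'.+3 = 8 * a by rewrite !expnS /a; lia.
have Ha : 0 < a by rewrite /a expn_gt0.
have K0 := key l'; rewrite -/a in K0.
have E2' : 2 ^ l'.+1 = 2 * a by rewrite expnS.
clearbody a.
rewrite mulSn in E2.
have F : forall k, k < m -> tm ((r*m).+1 + k) = tm (((r+a)*m).+1 + k).
  move=> k Hk; rewrite /tm !addSn /= E1 E3.
  have -> : p * 2 ^ l'.+3 + 2 ^ l'.+1 + h + k = p * 2 ^ l'.+3 + (2 * a + (h + k)) by lia.
  have -> : q * 2 ^ l'.+3 + 3 * a + h + k = q * 2 ^ l'.+3 + (3 * a + (h + k)) by lia.
  have Hx : h + k < 3 * a by move: E1 E2 E2' Hk; clear; lia.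
  rewrite !pop_split; [|move: Hx E8; clear; lia|move: Hx E8; clear; lia].
  have K := K0 (h + k) Hx.
  move: Htm; rewrite /tm /= !oddD; move: K.
  case: (odd (popcount p)); case: (odd (popcount q));
  case: (odd (popcount (2 * a + _))); case: (odd (popcount (3 * a + _))) => //.
have Feq : factor (r * m).+1 (r.+1 * m) =
    factor ((r + a) * m).+1 ((r + a).+1 * m).
  rewrite /factor.
  have -> : (r.+1 * m).+1 - (r * m).+1 = m by rewrite mulSn; lia.
  have -> : ((r + a).+1 * m).+1 - ((r + a) * m).+1 = m by rewrite mulSn; lia.
  exact: map_iota_eq.
split => //.
exists (r + a).+1; split; first lia.
move=> H; have := H r (r + a) ltac:(lia) ltac:(lia) Feq.
lia.
Qed.
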